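(* Let $n,k,t$ be positive integers with $k>t>0$ and $n>2k-t$. Then $$\operatorname{tw}(K(n,k,t))\le \binom{n}{k}-\binom{n-t}{k-t}-1.$$
   Context: For integers $k>t\ge 1$ and $n>2k-t$, the generalized Kneser graph $K(n,k,t)$ is the graph whose vertices are the $k$-element subsets of $[n]=\{1,\dots,n\}$, two vertices $K,K'$ being adjacent if and only if $|K\cap K'|<t$. A tree decomposition of a graph $\Gamma$ is a pair $(T,(B_x)_{x\in V(T)})$ where $T$ is a tree and each $B_x\subseteq V(\Gamma)$, such that every edge of $\Gamma$ is contained in some $B_x$, and for each vertex $v$ of $\Gamma$ the set $\{x\in V(T): v\in B_x\}$ is non-empty and induces a connected subgraph of $T$. Its width is $\max_x |B_x|-1$, and the treewidth $\operatorname{tw}(\Gamma)$ is the minimum width of a tree decomposition of $\Gamma$. *)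

(* Defs.v *)
From mathcomp Require Import all_boot all_order.
Set Implicit Arguments. Unset Strict Implicit. Unset Printing Implicit Defensive.

Record sgraph (V : finType) := SGraph {
  adj : rel V;
  adj_sym : symmetric adj;
  adj_irr : irreflexive adj }.

Definition is_tree (N : nat) (e : rel 'I_N) : Prop :=
  [/\ 0 < N, symmetric e, irreflexive e,
      (forall x y, connect e x y) &
      #|[set p : 'I_N * 'I_N | e p.1 p.2 && (p.1 < p.2)%N]| = N.-1].

Definition induces_connected (N : nat) (e : rel 'I_N) (S : {set 'I_N}) : Prop :=
  forall x y, x \in S -> y \in S ->
    connect (fun a b => [&& e a b, a \in S & b \in S]) x y.

Definition tree_decomposition (V : finType) (G : sgraph V)
  (N : nat) (e : rel 'I_N) (B : 'I_N -> {set V}) : Prop :=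
  [/\ is_tree e,
      (forall u v, adj G u v -> exists x, (u \in B x) && (v \in B x)) &
      (forall v, (exists x, v \in B x) /\
                 induces_connected e [set x | v \in B x])].


Definition td_width (V : finType) (N : nat) (B : 'I_N -> {set V}) : nat :=
  (\max_(x : 'I_N) #|B x|).-1.

Definition has_td_of_width (V : finType) (G : sgraph V) (w : nat) : Prop :=
  exists N (e : rel 'I_N) (B : 'I_N -> {set V}),
    tree_decomposition G e B /\ td_width B = w.

(* tw(G) <= m, where tw(G) is the minimum width of a tree decomposition:
   since the minimum is attained, tw(G) <= m iff some tree decomposition
   has width <= m. *)
Definition treewidth_le (V : finType) (G : sgraph V) (m : nat) : Prop :=
  exists w, w <= m /\ has_td_of_width G w.

Definition kvert (n k : nat) := {A : {set 'I_n} | #|A| == k}.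

Definition kneser_rel (n k t : nat) : rel (kvert n k) :=
  fun A B => (A != B) && (#|val A :&: val B| < t).

Lemma kneser_sym (n k t : nat) : symmetric (@kneser_rel n k t).
Proof. by move=> A B; rewrite /kneser_rel eq_sym setIC. Qed.

Lemma kneser_irr (n k t : nat) : irreflexive (@kneser_rel n k t).
Proof. by move=> A; rewrite /kneser_rel eqxx. Qed.

Definition Kneser (n k t : nat) : sgraph (kvert n k) :=
  SGraph (@kneser_sym n k t) (@kneser_irr n k t).

(* Main.v *)
Require Import Defs.
From mathcomp Require Import all_boot all_order.
From mathcomp Require Import zify.

Lemma card_T0 (n t : nat) : t <= n -> #|[set i : 'I_n | i < t]| = t.
Proof.
move=> htn.
have -> : [set i : 'I_n | i < t] = [set widen_ord htn i | i : 'I_t].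
  apply/setP=> i; rewrite inE; apply/idP/imsetP.
    by move=> it; exists (Ordinal it) => //; apply: val_inj.
  by case=> j _ ->; rewrite /= ltn_ord.
by rewrite card_imset ?card_ord //; by move=> a b /(congr1 val) /= /val_inj.
Qed.

Lemma card_kvert (n k : nat) : #|{: kvert n k}| = 'C(n, k).
Proof.
rewrite card_sig; have := card_draws 'I_n k; rewrite card_ord => <-.
by apply: eq_card => A; rewrite !inE.
Qed.

Definition star_rel (N : nat) : rel 'I_N.+1 :=
  fun x y => (x != y) && ((x == ord0) || (y == ord0)).

Lemma star_connect0 (N : nat) (x : 'I_N.+1) : connect (star_rel N) x ord0.
Proof.
case: (eqVneq x ord0) => [->|hx]; first exact: connect0.
by apply: connect1; rewrite /star_rel hx eqxx orbT.
Qed.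

Lemma star_connect (N : nat) (x y : 'I_N.+1) : connect (star_rel N) x y.
Proof.
apply: (@connect_trans _ _ ord0 _ _ (star_connect0 _ x)).
case: (eqVneq y ord0) => [->|hy]; first exact: connect0.
by apply: connect1; rewrite /star_rel eq_sym hy eqxx.
Qed.

Lemma star_tree (N : nat) : is_tree (star_rel N).
Proof.
split => //.
- by move=> x y; rewrite /star_rel eq_sym orbC.
- by move=> x; rewrite /star_rel eqxx.
- exact: star_connect.
have -> : [set p : 'I_N.+1 * 'I_N.+1 | star_rel N p.1 p.2 && (p.1 < p.2)%N]
        = setX [set ord0] [set~ ord0].
  apply/setP => -[[[|x] hx] [[|y] hy]]; rewrite !inE /star_rel /=;
  by rewrite -?val_eqE /= ?andbT ?andbF.
by rewrite cardsX cards1 cardsC1 card_ord mul1n.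
Qed.

Lemma star_conn_with0 (N : nat) (S : {set 'I_N.+1}) :
  ord0 \in S -> induces_connected (star_rel N) S.
Proof.
move=> h0 x y xS yS.
have c0 : forall z, z \in S ->
   connect (fun a b => [&& star_rel N a b, a \in S & b \in S]) z ord0.
  move=> z zS; case: (eqVneq z ord0) => [->|hz]; first exact: connect0.
  by apply: connect1; rewrite /star_rel hz eqxx orbT zS h0.
apply: (@connect_trans _ _ ord0 _ _ (c0 x xS)).
rewrite sym_connect_sym; first exact: c0.
by move=> a b /=; rewrite /star_rel eq_sym orbC; case: (a \in S); case: (b \in S); rewrite ?andbT ?andbF.
Qed.

Lemma indepF (n k t : nat) (u v : kvert n k) : t <= n ->
  [set i : 'I_n | i < t] \subset val u ->
  [set i : 'I_n | i < t] \subset val v -> ~~ kneser_rel t u v.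
Proof.
move=> tn hu hv; rewrite /kneser_rel negb_and -leqNgt; apply/orP; right.
rewrite -{1}(card_T0 _ _ tn); apply: subset_leq_card; by rewrite subsetI hu hv.
Qed.

Lemma existsW (n k t : nat) (v : kvert n k) : 0 < t -> t < k -> k < n ->
  [set i : 'I_n | i < t] \subset val v ->
  exists W : kvert n k, ~~ ([set i : 'I_n | i < t] \subset val W) /\
                        ~~ kneser_rel t v W.
Proof.
move=> t0 tk kn hv.
have n0 : 0 < n by lia.
pose i0 : 'I_n := Ordinal n0.
have i0v : i0 \in val v by apply: (subsetP hv); rewrite inE.
have /subsetPn [x _ xv] : ~~ ([set: 'I_n] \subset val v).
  apply/negP => /subset_leq_card; rewrite cardsT card_ord (eqP (valP v)); lia.
pose WA := x |: (val v :\ i0).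
have cv := cardsD1 i0 (val v); rewrite i0v (eqP (valP v)) /= in cv.
have xnot : x \notin val v :\ i0 by rewrite in_setD1 (negbTE xv) andbF.
have hW : #|WA| == k by rewrite /WA cardsU1 xnot /=; apply/eqP; exact: esym cv.
exists (exist _ WA hW); split => /=.
  apply/negP => /subsetP /(_ i0); rewrite inE /= => /(_ t0).
  rewrite /WA in_setU1 in_setD1 eqxx /=; apply/negP; rewrite orbF.
  by apply/eqP => e; move: xv; rewrite -e i0v.
rewrite /kneser_rel negb_and -leqNgt; apply/orP; right => /=.
have : val v :\ i0 \subset val v :&: WA.
  by rewrite subsetI subD1set /WA subsetU1.
move/subset_leq_card => h; apply: leq_trans h.
have hcv : forall a, k = 1 + a -> t <= a by move=> a e; lia.
exact: hcv _ cv.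
Qed.

Lemma cardF (n k t : nat) : t <= k -> k <= n ->
  'C(n - t, k - t) <= #|[set A : kvert n k | [set i : 'I_n | i < t] \subset val A]|.
Proof.
move=> tk kn.
have tn : t <= n by lia.
set T0 := [set i : 'I_n | i < t].
set F := [set A : kvert n k | T0 \subset val A].
have shp : forall i : 'I_(n - t), i + t < n by move=> i; have := ltn_ord i; lia.
pose sh (i : 'I_(n - t)) : 'I_n := Ordinal (shp i).
have shinj : injective sh.
  move=> a b /(congr1 val) /= h; apply: val_inj => /=; lia.
have shT0 : forall i, sh i \notin T0 by move=> i; rewrite inE /= -leqNgt leq_addl.
pose f (B : {set 'I_(n - t)}) := T0 :|: [set sh i | i in B].
have finj : injective f.
  move=> B1 B2 e; apply/setP => i.
  have : (sh i \in f B1) = (sh i \in f B2) by rewrite e.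
  by rewrite !in_setU (negbTE (shT0 i)) !mem_imset.
pose D := [set B : {set 'I_(n - t)} | #|B| == k - t].
have cD : #|D| = 'C(n - t, k - t).
  by have := card_draws 'I_(n - t) (k - t); rewrite card_ord.
have cf : forall B, #|f B| = t + #|B|.
  move=> B; rewrite cardsU card_imset // card_T0 //.
  have -> : T0 :&: [set sh i | i in B] = set0.
    apply/setP => j; rewrite !inE; apply/negP => /andP[jt /imsetP[i _ ej]].
    by move: (shT0 i); rewrite -ej inE jt.
  by rewrite cards0 subn0.
rewrite -cD -(card_in_imset (f := f)); last by move=> ? ? _ _; apply: finj.
rewrite -(card_imset F val_inj); apply: subset_leq_card.
apply/subsetP => A /imsetP[B BD ->].
have hk : #|f B| == k by rewrite cf; move: BD; rewrite inE => /eqP ->; apply/eqP; lia.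
apply/imsetP; exists (exist _ (f B) hk) => //.
by rewrite inE /= subsetUl.
Qed.

Theorem mainTheorem1 (n k t : nat) :
  0 < t -> t < k -> 2 * k - t < n ->
  treewidth_le (Kneser n k t) ('C(n, k) - 'C(n - t, k - t) - 1).
Proof.
move=> t0 tk hn.
have kn : k < n by lia.
have tn : t <= n by lia.
set T0 := [set i : 'I_n | i < t].
pose F := [set A : kvert n k | T0 \subset val A].
have indep : forall u v, u \in F -> v \in F -> ~~ kneser_rel t u v.
  by move=> u v; rewrite !inE; apply: indepF.
have cF := cardF n k t (ltnW tk) (ltnW kn).
pose N := #|{: kvert n k}|.
pose B (x : 'I_N.+1) : {set kvert n k} :=
  match unlift ord0 x with
  | None => ~: F
  | Some i => let v := enum_val i in
              if v \in F then v |: [set u | kneser_rel t v u] else set0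
  end.
have Bleaf : forall v, v \in F ->
    B (lift ord0 (enum_rank v)) = v |: [set u | kneser_rel t v u].
  by move=> v vF; rewrite /B liftK enum_rankK vF.
have B0 : B ord0 = ~: F by rewrite /B unlift_none.
have key : forall w x, w \in F -> w \in B x -> x = lift ord0 (enum_rank w).
  move=> w x wF; rewrite /B; case: (unliftP ord0 x) => [j ->|->]; last first.
    by rewrite inE wF.
  case vF: (enum_val j \in F); last by rewrite inE.
  rewrite in_setU1 inE => /orP[/eqP->|]; first by rewrite enum_valK.
  by move=> a; move: (indep _ _ vF wF); rewrite a.
exists (td_width B); split; last first.
  exists N.+1, (star_rel N), B; split => //; split.
  - exact: star_tree.
  - move=> u v /= uv.
    case uF: (u \in F).
      by exists (lift ord0 (enum_rank u)); rewrite Bleaf // !in_setU1 !inE eqxx uv /= orbT.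
    case vF: (v \in F).
      exists (lift ord0 (enum_rank v)); rewrite Bleaf // !in_setU1 !inE eqxx.
      by rewrite (@kneser_sym n k t v u) uv /= orbT.
    by exists ord0; rewrite B0 !in_setC uF vF.
  - move=> w; case wF: (w \in F); split.
    + by exists (lift ord0 (enum_rank w)); rewrite Bleaf // in_setU1 eqxx.
    + move=> x y; rewrite !inE => /(key _ _ wF) -> /(key _ _ wF) ->.
      exact: connect0.
    + by exists ord0; rewrite B0 in_setC wF.
    + by apply: star_conn_with0; rewrite inE B0 in_setC wF.
have cC : #|~: F| = 'C(n, k) - #|F|.
  by rewrite -card_kvert (cardsCs (~: F)) setCK.
have bnd : forall x, #|B x| <= #|~: F|.
  move=> x; rewrite /B; case: (unlift ord0 x) => [i|//].
  case vF: (enum_val i \in F); last by rewrite cards0.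
  set v := enum_val i.
  have vF2 : T0 \subset val v by move: vF; rewrite inE.
  have [W [WF Wv]] := existsW n k t v t0 tk kn vF2.
  rewrite cardsU1.
  suff : [set u | kneser_rel t v u] \proper ~: F.
    move/proper_card => h; apply: leq_trans h; by rewrite -add1n leq_add2r leq_b1.
  apply/properP; split.
    apply/subsetP => u; rewrite inE in_setC => vu; apply/negP => uF.
    by move: (indep _ _ vF uF); rewrite vu.
  by exists W; rewrite ?in_setC inE ?(negbTE Wv) //.
rewrite /td_width.
have : \max_(x : 'I_N.+1) #|B x| <= 'C(n, k) - 'C(n - t, k - t).
  apply/bigmax_leqP => x _; apply: leq_trans (bnd x) _.
  rewrite cC; exact: leq_sub2l.
move: (\max_(x : 'I_N.+1) #|B x|) => m; lia.
Qed.
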